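(* Let $\bm v_1, \dots, \bm v_N \in \mathbb{S}^{r-1}$ span $\mathbb{R}^r$, let $\bm V \in \mathbb{R}^{r\times N}$ have the $\bm v_i$ as columns, let $\bm v := \mathrm{vec}(\bm V)$, and let $\bm M^\star \in \mathcal{B}(N,r)$ satisfy $\bm v^\top \bm M^\star \bm v = N^2$. Then every eigenvector of $\bm M^\star$ with nonzero eigenvalue lies in $$V_{\mathrm{sym}} := \{\mathrm{vec}(\bm S \bm V) : \bm S \in \mathbb{R}^{r\times r}_{\mathrm{sym}}\} \subset \mathbb{R}^{rN}.$$ Moreover, $\bm v$ is an eigenvector of $\bm M^\star$ with eigenvalue $N$, and every eigenvector of $\bm M^\star$ with nonzero eigenvalue that is orthogonal to $\bm v$ lies in $$V'_{\mathrm{sym}} := \{\mathrm{vec}(\bm S \bm V) : \bm S \in \mathbb{R}^{r\times r}_{\mathrm{sym}},\ \bm v_i^\top \bm S \bm v_i = 0 \text{ for all } i\in[N]\}.$$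
   Context: $\mathbb{S}^{r-1}$ is the unit sphere in $\mathbb{R}^r$; $\mathbb{R}^{r\times r}_{\mathrm{sym}}$ is the space of symmetric $r\times r$ real matrices. For $\bm V \in \mathbb{R}^{r\times N}$ with columns $\bm v_i$, $\mathrm{vec}(\bm V) \in \mathbb{R}^{rN}$ is the concatenation $(\bm v_1;\dots;\bm v_N)$. A matrix $\bm M \in \mathbb{R}^{rN\times rN}$ is viewed as an $N\times N$ array of $r\times r$ blocks, $\bm M_{[ij]}$ denoting block $(i,j)$. $\mathcal{B}(N,r)$ is the set of symmetric $\bm M \in \mathbb{R}^{rN\times rN}$ with $\bm M \succeq 0$, $\bm M_{[ii]} = \bm I_r$ for all $i$, and $\bm M_{[ij]} = \bm M_{[ij]}^\top$ for all $i,j$. *)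

(* Defs.v *)
(* Real numbers are modelled by an arbitrary real closed field
   (rcfType). *)
From HB Require Import structures.
From mathcomp Require Import all_boot all_order all_algebra.
Set Implicit Arguments. Unset Strict Implicit. Unset Printing Implicit Defensive.
Import Order.TTheory GRing.Theory Num.Theory.
Local Open Scope ring_scope.

(* vec(V) = (v_1; ...; v_N) : the column-stacking of V : r x N.
   Entry (i, a) (column i, coordinate a) sits at index mxvec_index i a = i*r + a. *)
Definition vecc (R : rcfType) (r N : nat) (V : 'M[R]_(r, N)) : 'cV[R]_(N * r) :=
  (mxvec V^T)^T.

Definition blk (R : rcfType) (N r : nat) (M : 'M[R]_(N * r)) (i j : 'I_N) : 'M[R]_r :=
  \matrix_(a < r, b < r) M (mxvec_index i a) (mxvec_index j b).

Definition psd (R : rcfType) (n : nat) (M : 'M[R]_n) : Prop :=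
  M^T = M /\ forall x : 'cV[R]_n, 0 <= (x^T *m M *m x) 0 0.

Definition inB (R : rcfType) (N r : nat) (M : 'M[R]_(N * r)) : Prop :=
  [/\ M^T = M, psd M,
      (forall i : 'I_N, blk M i i = 1%:M) &
      (forall i j : 'I_N, (blk M i j)^T = blk M i j)].

Definition eigvec (R : rcfType) (n : nat) (M : 'M[R]_n) (x : 'cV[R]_n) (lam : R) : Prop :=
  x != 0 /\ M *m x = lam *: x.

Definition symmx (R : rcfType) (r : nat) (S : 'M[R]_r) : Prop := S^T = S.

Definition in_Vsym (R : rcfType) (r N : nat) (V : 'M[R]_(r, N)) (x : 'cV[R]_(N * r)) : Prop :=
  exists S : 'M[R]_r, symmx S /\ x = vecc (S *m V).

Definition in_Vsym' (R : rcfType) (r N : nat) (V : 'M[R]_(r, N)) (x : 'cV[R]_(N * r)) : Prop :=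
  exists S : 'M[R]_r, [/\ symmx S,
     (forall i : 'I_N, ((col i V)^T *m S *m col i V) 0 0 = 0) &
     x = vecc (S *m V)].

(* Main.v *)
Require Import Defs.
From HB Require Import structures.
From mathcomp Require Import all_boot all_order all_algebra.
From mathcomp Require Import ring lra.
Import Order.TTheory GRing.Theory Num.Theory.
Local Open Scope ring_scope.
Set Implicit Arguments. Unset Strict Implicit. Unset Printing Implicit Defensive.

Section H.
Variable R : rcfType.

Definition dot n (u w : 'cV[R]_n) : R := (u^T *m w) 0 0.

Lemma dotE n (u w : 'cV[R]_n) : dot u w = \sum_a u a 0 * w a 0.
Proof. by rewrite /dot mxE; apply: eq_bigr => a _; rewrite mxE. Qed.

Lemma dotDl n (u v w : 'cV[R]_n) : dot (u + v) w = dot u w + dot v w.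
Proof. by rewrite !dotE -big_split; apply: eq_bigr => a _; rewrite mxE mulrDl. Qed.
Lemma dotBl n (u v w : 'cV[R]_n) : dot (u - v) w = dot u w - dot v w.
Proof. by rewrite !dotE -sumrB; apply: eq_bigr => a _; rewrite !mxE mulrBl. Qed.
Lemma dotC n (u w : 'cV[R]_n) : dot u w = dot w u.
Proof. by rewrite !dotE; apply: eq_bigr => a _; rewrite mulrC. Qed.
Lemma dotDr n (u v w : 'cV[R]_n) : dot w (u + v) = dot w u + dot w v.
Proof. by rewrite dotC dotDl !(dotC w). Qed.
Lemma dotBr n (u v w : 'cV[R]_n) : dot w (u - v) = dot w u - dot w v.
Proof. by rewrite dotC dotBl !(dotC w). Qed.
Lemma dotZl n a (u w : 'cV[R]_n) : dot (a *: u) w = a * dot u w.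
Proof. by rewrite !dotE mulr_sumr; apply: eq_bigr => b _; rewrite mxE mulrA. Qed.
Lemma dotZr n a (u w : 'cV[R]_n) : dot w (a *: u) = a * dot w u.
Proof. by rewrite dotC dotZl dotC. Qed.
Lemma dot0l n (w : 'cV[R]_n) : dot 0 w = 0.
Proof. by rewrite dotE big1 // => a _; rewrite mxE mul0r. Qed.
Lemma dot_sumr n (I : finType) (F : I -> 'cV[R]_n) w :
  dot w (\sum_i F i) = \sum_i dot w (F i).
Proof.
rewrite dotE; under eq_bigr do rewrite summxE mulr_sumr.
by rewrite exchange_big; apply: eq_bigr => i _; rewrite dotE.
Qed.
Lemma dot_mulmx n (A : 'M[R]_n) u w : dot u (A *m w) = dot (A^T *m u) w.
Proof. by rewrite /dot trmx_mul trmxK mulmxA. Qed.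
Lemma dot_self_ge0 n (u : 'cV[R]_n) : 0 <= dot u u.
Proof. by rewrite dotE sumr_ge0 // => a _; rewrite -expr2 sqr_ge0. Qed.
Lemma dot_self_eq0 n (u : 'cV[R]_n) : dot u u = 0 -> u = 0.
Proof.
rewrite dotE => /psumr_eq0P H; apply/colP => a; rewrite mxE.
have H0 : forall b : 'I_n, true -> 0 <= u b 0 * u b 0.
  by move=> b _; rewrite -expr2 sqr_ge0.
by have /eqP := H H0 a isT; rewrite mulf_eq0 => /orP[] /eqP.
Qed.

Lemma psd_ker n (M : 'M[R]_n) e : M^T = M -> (forall x, 0 <= dot x (M *m x)) ->
  dot e (M *m e) = 0 -> M *m e = 0.
Proof.
move=> MT Mp He; set y := M *m e.
set c := dot y y; set q := dot y (M *m y).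
have c0 : 0 <= c by exact: dot_self_ge0.
have q0 : 0 <= q by exact: Mp.
have h1 : dot e (M *m y) = c by rewrite dot_mulmx MT.
have h2 : dot y (M *m e) = c by [].
set s := (q + 1)^-1.
have s0 : 0 < s by rewrite invr_gt0; lra.
have sq : s * (q + 1) = 1 by rewrite mulVf // lt0r_neq0 //; lra.
have := Mp (e + (- (s * c)) *: y).
rewrite mulmxDr -scalemxAr !dotDl !dotDr !dotZl !dotZr He h1 h2 -/q => H.
have hc : c * c * s <= 0 by nra.
have hcc : c * c <= 0.
  by nra.
apply: dot_self_eq0; apply/eqP; rewrite -/c -sqrf_eq0 expr2 eq_le hcc /=.
by rewrite mulr_ge0.
Qed.

Section B.
Variables (r N : nat).
Implicit Types (f g : 'I_N -> 'cV[R]_r) (x : 'cV[R]_(N * r)).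

Definition bv f : 'cV[R]_(N * r) := vecc (\matrix_(a < r, i < N) f i a 0).
Definition bk x (i : 'I_N) : 'cV[R]_r := \col_a x (mxvec_index i a) 0.

Lemma vecc_idx (W : 'M[R]_(r, N)) i a : vecc W (mxvec_index i a) 0 = W a i.
Proof. by rewrite /vecc mxE mxvecE mxE. Qed.

Lemma bk_bv f i : bk (bv f) i = f i.
Proof. by apply/colP => a; rewrite mxE vecc_idx mxE. Qed.

Lemma bv_bk x : bv (bk x) = x.
Proof. by apply/colP => k; case/mxvec_indexP: k => i a; rewrite vecc_idx !mxE. Qed.

Lemma vecc_bv (W : 'M[R]_(r, N)) : vecc W = bv (fun i => col i W).
Proof. by apply/colP => k; case/mxvec_indexP: k => i a; rewrite !vecc_idx !mxE. Qed.

Lemma bv_ext f g : (forall i, f i = g i) -> bv f = bv g.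
Proof. by move=> e; apply/colP => k; case/mxvec_indexP: k => i a; rewrite !vecc_idx !mxE e. Qed.

Lemma bvZ a f : a *: bv f = bv (fun i => a *: f i).
Proof. by apply/colP => k; case/mxvec_indexP: k => i a'; rewrite /bv [LHS]mxE !vecc_idx !mxE. Qed.

Lemma bvD f g : bv f + bv g = bv (fun i => f i + g i).
Proof. by apply/colP => k; case/mxvec_indexP: k => i a'; rewrite /bv [LHS]mxE !vecc_idx !mxE. Qed.

Lemma bvB f g : bv f - bv g = bv (fun i => f i - g i).
Proof. by rewrite -scaleN1r bvZ bvD; apply: bv_ext => i; rewrite scaleN1r. Qed.

Lemma bkB x y i : bk (x - y) i = bk x i - bk y i.
Proof. by apply/colP => a; rewrite !mxE. Qed.

Lemma sum_idx (F : 'I_(N * r) -> R) :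
  \sum_k F k = \sum_i \sum_a F (mxvec_index i a).
Proof.
rewrite (reindex _ (curry_mxvec_bij _ _)) /=.
by rewrite pair_bigA; apply: eq_bigr => -[i a].
Qed.

Lemma dot_bv f g : dot (bv f) (bv g) = \sum_i dot (f i) (g i).
Proof.
rewrite dotE sum_idx; apply: eq_bigr => i _; rewrite dotE.
by apply: eq_bigr => a _; rewrite !vecc_idx !mxE.
Qed.

Lemma Mbv (M : 'M[R]_(N * r)) g :
  M *m bv g = bv (fun i => \sum_j blk M i j *m g j).
Proof.
apply/colP => k; case/mxvec_indexP: k => i a.
rewrite vecc_idx !mxE sum_idx summxE; apply: eq_bigr => j _.
rewrite mxE; apply: eq_bigr => b _.
by rewrite vecc_idx !mxE.
Qed.

Definition emb (i : 'I_N) (w : 'cV[R]_r) := bv (fun k => (k == i)%:R *: w).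

Lemma dot_emb i w x : dot (emb i w) x = dot w (bk x i).
Proof.
rewrite -{1}(bv_bk x) dot_bv (bigD1 i) //= big1 ?addr0.
  by rewrite eqxx scale1r.
by move=> k /negbTE ->; rewrite scale0r dot0l.
Qed.

Lemma M_emb (M : 'M[R]_(N * r)) j w :
  M *m emb j w = bv (fun k => blk M k j *m w).
Proof.
rewrite Mbv; apply: bv_ext => k.
rewrite (bigD1 j) //= big1 ?addr0.
  by rewrite eqxx scale1r.
by move=> l /negbTE ->; rewrite scale0r mulmx0.
Qed.

Lemma dM (M : 'M[R]_(N * r)) i j u w :
  dot (emb i u) (M *m emb j w) = dot u (blk M i j *m w).
Proof. by rewrite dot_emb M_emb bk_bv. Qed.

Lemma quad_bv (M : 'M[R]_(N * r)) f g :
  dot (bv f) (M *m bv g) = \sum_i \sum_j dot (f i) (blk M i j *m g j).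
Proof. by rewrite Mbv dot_bv; apply: eq_bigr => i _; rewrite dot_sumr. Qed.

End B.
Lemma mtm0 (m n : nat) (W : 'M[R]_(m, n)) : W^T *m W = 0 -> W = 0.
Proof.
move=> h; apply/matrixP => a k.
have e : dot (col k W) (col k W) = (W^T *m W) k k.
  by rewrite dotE mxE; apply: eq_bigr => b _; rewrite !mxE.
rewrite h mxE in e.
have := congr1 (fun z : 'cV[R]_m => z a 0) (dot_self_eq0 e); rewrite !mxE //.
Qed.

Lemma bk0 (r N : nat) i : bk (0 : 'cV[R]_(N * r)) i = 0.
Proof. by apply/colP => a; rewrite !mxE. Qed.
End H.

Theorem lemma2 (R : rcfType) (r N : nat) (V : 'M[R]_(r, N)) (M : 'M[R]_(N * r)) :
  (0 < r)%N ->
  (forall i : 'I_N, ((col i V)^T *m col i V) 0 0 = 1) ->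
  \rank V = r ->
  inB M ->
  ((vecc V)^T *m M *m vecc V) 0 0 = (N ^ 2)%:R ->
  [/\ (forall (x : 'cV[R]_(N * r)) (lam : R), eigvec M x lam -> lam != 0 -> in_Vsym V x),
      eigvec M (vecc V) N%:R &
      (forall (x : 'cV[R]_(N * r)) (lam : R), eigvec M x lam -> lam != 0 ->
         (vecc V)^T *m x = 0 -> in_Vsym' V x)].
Proof.
move=> r0 hv hrk [Msym [_ Mpsd'] Mdiag Mblk] hN.
have hv' : forall i, dot (col i V) (col i V) = 1 := hv.
have Mpsd : forall x, 0 <= dot x (M *m x).
  by move=> x; rewrite /dot mulmxA; exact: Mpsd'.
have BT : forall i j, (blk M i j)^T = blk M j i.
  by move=> i j; apply/matrixP => a b; rewrite !mxE -{1}Msym mxE.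
have Bs : forall i j, blk M j i = blk M i j by move=> i j; rewrite -BT Mblk.
have qii : forall i, dot (col i V) (blk M i i *m col i V) = 1.
  by move=> i; rewrite Mdiag mul1mx.
have qs : forall i j, dot (col j V) (blk M j i *m col i V) =
                      dot (col i V) (blk M i j *m col j V).
  by move=> i j; rewrite -(BT i j) dot_mulmx trmxK dotC.
have hd : forall i j, dot (emb i (col i V) - emb j (col j V))
   (M *m (emb i (col i V) - emb j (col j V))) =
   2 - 2 * dot (col i V) (blk M i j *m col j V).
  move=> i j; rewrite mulmxBr !dotBl !dotBr !dM qs !qii.
  set t := dot _ _; lra.
have hq1 : forall i j, dot (col i V) (blk M i j *m col j V) <= 1.
  move=> i j; have := Mpsd (emb i (col i V) - emb j (col j V)); rewrite hd; lra.
have hsum : \sum_i \sum_j dot (col i V) (blk M i j *m col j V) = (N ^ 2)%:R.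
  by rewrite -hN -mulmxA -/(dot _ _) vecc_bv quad_bv.
have hq : forall i j, dot (col i V) (blk M i j *m col j V) = 1.
  have h0 : \sum_i \sum_j (1 - dot (col i V) (blk M i j *m col j V)) = 0.
    under eq_bigr do rewrite sumrB sumr_const card_ord.
    by rewrite sumrB hsum sumr_const card_ord natrX expr2 mulr_natr subrr.
  move=> i j.
  have h1 : forall i, true -> 0 <= \sum_j (1 - dot (col i V) (blk M i j *m col j V)).
    by move=> i' _; apply: sumr_ge0 => j' _; rewrite subr_ge0.
  have h2 := @psumr_eq0P _ _ _ _ h1 h0 i isT.
  have h3 : forall j, true -> 0 <= (1 - dot (col i V) (blk M i j *m col j V)).
    by move=> j' _; rewrite subr_ge0.
  have := @psumr_eq0P _ _ _ _ h3 h2 j isT; lra.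
have kd : forall i j, M *m (emb i (col i V) - emb j (col j V)) = 0.
  by move=> i j; apply: psd_ker => //; rewrite hd hq; lra.
have H1 : forall i j, blk M i j *m col j V = col i V.
  move=> i j; have := congr1 (fun z => bk z i) (kd i j).
  rewrite /= mulmxBr bk0 bkB !M_emb !bk_bv Mdiag mul1mx => /eqP.
  by rewrite subr_eq0 => /eqP.
have ke : forall i j, M *m (emb j (col i V) - emb i (col j V)) = 0.
  move=> i j; apply: psd_ker => //.
  rewrite mulmxBr !dotBl !dotBr !dM !Mdiag !mul1mx !hv'.
  rewrite Bs H1 hv' -(Bs i j) H1 hv'; lra.
have N0 : (0 < N)%N.
  by have := rank_leq_col V; rewrite hrk => rN; exact: leq_trans r0 rN.
have NR : (N%:R : R) != 0 by rewrite pnatr_eq0 -lt0n.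
have orth : forall x lam k, eigvec M x lam -> lam != 0 -> M *m k = 0 -> dot k x = 0.
  move=> x lam k [_ Hx] l0 Hk.
  have : lam * dot k x = 0 by rewrite -dotZr -Hx dot_mulmx Msym Hk dot0l.
  by move/eqP; rewrite mulf_eq0 (negbTE l0) => /eqP.
have symx : forall x lam, eigvec M x lam -> lam != 0 ->
    forall i j, dot (col i V) (bk x j) = dot (col j V) (bk x i).
  move=> x lam hx l0 i j; have := orth _ _ _ hx l0 (ke i j).
  by rewrite dotBl !dot_emb => /eqP; rewrite subr_eq0 => /eqP.
have diagx : forall x lam, eigvec M x lam -> lam != 0 ->
    forall i j, dot (col i V) (bk x i) = dot (col j V) (bk x j).
  move=> x lam hx l0 i j; have := orth _ _ _ hx l0 (kd i j).
  by rewrite dotBl !dot_emb => /eqP; rewrite subr_eq0 => /eqP.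
have hXx : forall x : 'cV[R]_(N * r), vecc (\matrix_(a, i) bk x i a 0) = x.
  move=> x; rewrite vecc_bv -[RHS](bv_bk x); apply: bv_ext => i.
  by apply/colP => a; rewrite !mxE.
have key : forall x lam, eigvec M x lam -> lam != 0 ->
    exists S : 'M[R]_r, symmx S /\ S *m V = \matrix_(a, i) bk x i a 0.
  move=> x lam hx l0; set X := \matrix_(a, i) bk x i a 0 : 'M[R]_(r, N).
  have hK : forall i j, (V^T *m X) i j = dot (col i V) (bk x j).
    by move=> i j; rewrite mxE dotE; apply: eq_bigr => a _; rewrite !mxE.
  have KT : (V^T *m X)^T = V^T *m X.
    by apply/matrixP => i j; rewrite mxE !hK (symx _ _ hx l0).
  have /row_freeP [G VG] : row_free V by rewrite /row_free hrk.
  exists (X *m G).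
  have XG : X *m G = G^T *m X^T.
    rewrite -[X in X *m G]mul1mx -trmx1 -VG trmx_mul.
    rewrite -(mulmxA G^T V^T X) -KT trmx_mul trmxK -!mulmxA VG mulmx1 //.
  split; first by rewrite /symmx trmx_mul XG.
  set A := 1%:M - G *m V.
  have VA : V *m A = 0 by rewrite mulmxBr mulmx1 mulmxA VG mul1mx subrr.
  have WW : (X *m A)^T *m (X *m A) = 0.
    rewrite {1}(_ : X *m A = V *m (G *m (X *m A))); last by rewrite mulmxA VG mul1mx.
    rewrite !trmx_mul -!mulmxA (mulmxA V^T) -KT trmx_mul trmxK -mulmxA VA.
    by rewrite !mulmx0.
  have := mtm0 WW; rewrite mulmxBr mulmx1 mulmxA => /eqP.
  by rewrite subr_eq0 => /eqP <-.
split.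
- move=> x lam hx l0; have [S [hS SV]] := key x lam hx l0.
  by exists S; split => //; rewrite SV hXx.
- split.
    apply/eqP => h; have := congr1 (fun z => dot z z) h.
    rewrite dot0l vecc_bv dot_bv (eq_bigr (fun=> 1)) ?sumr_const ?card_ord.
      by move=> /eqP; rewrite -mulr_natr mul1r (negbTE NR).
    by move=> i _; rewrite hv'.
  rewrite vecc_bv Mbv bvZ; apply: bv_ext => i.
  rewrite (eq_bigr (fun=> col i V)) ?sumr_const ?card_ord ?scaler_nat //.
- move=> x lam hx l0 hx0; have [S [hS SV]] := key x lam hx l0.
  exists S; split => //; last by rewrite SV hXx.
  move=> i.
  have -> : (col i V)^T *m S *m col i V = (col i V)^T *m col i (S *m V).
    rewrite -mulmxA; congr (_ *m _).
    by apply/colP => a; rewrite !mxE; apply: eq_bigr => b _; rewrite !mxE.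
  rewrite SV.
  have -> : col i (\matrix_(a, i) bk x i a 0) = bk x i.
    by apply/colP => a; rewrite !mxE.
  change (dot (col i V) (bk x i) = 0).
  have : dot (vecc V) x = 0 by rewrite /dot hx0 mxE.
  rewrite vecc_bv -{1}(bv_bk x) dot_bv.
  rewrite (eq_bigr (fun=> dot (col i V) (bk x i))) ?sumr_const ?card_ord.
    by move=> /eqP; rewrite -mulr_natr mulf_eq0 (negbTE NR) orbF => /eqP.
  by move=> j _; exact: (diagx _ _ hx l0).
Qed.
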